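(* Let $n>2k$, $k\ge t+3$, $t\ge 2$, and let $\mathcal F\subseteq\binom{[n]}{k}$ be a maximal $t$-intersecting family with $\tau_t(\mathcal F)=t+2$ and $\tau_t(\mathcal T_t(\mathcal F))=t+1$. If there exist $U\in\mathcal U_t(\mathcal F)$ and $F\in\mathcal F$ with $|U\cap F|\le t-2$, then $|\mathcal T_t(\mathcal F)|<(t+2)(k-t)+1$.
   Context: A family is $t$-intersecting if any two members meet in at least $t$ elements. A $t$-cover of a family $\mathcal G$ of subsets of $[n]$ is a set $S\subseteq[n]$ with $|S\cap G|\ge t$ for all $G\in\mathcal G$; $\tau_t(\mathcal G)$ is the minimum size of a $t$-cover, and $\mathcal T_t(\mathcal G)$ is the set of all $t$-covers of $\mathcal G$ of size $\tau_t(\mathcal G)$. $\mathcal U_t(\mathcal F)=\mathcal T_t(\mathcal T_t(\mathcal F))$ is the family of all minimum-size $t$-covers of $\mathcal T_t(\mathcal F)$. A $t$-intersecting $\mathcal F\subseteq\binom{[n]}{k}$ is maximal if no $t$-intersecting subfamily of $\binom{[n]}{k}$ properly contains it. *)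

(* Defs.v *)
From mathcomp Require Import all_boot.
Set Implicit Arguments. Unset Strict Implicit. Unset Printing Implicit Defensive.

Definition k_uniform (n k : nat) (F : {set {set 'I_n}}) : bool :=
  [forall A in F, #|A| == k].

Definition t_intersecting (n t : nat) (F : {set {set 'I_n}}) : bool :=
  [forall A in F, forall B in F, t <= #|A :&: B|].

Definition is_tcover (n t : nat) (G : {set {set 'I_n}}) (S : {set 'I_n}) : bool :=
  [forall G0 in G, t <= #|S :&: G0|].

(* tau_t(G): minimum size of a t-cover (default n.+1 if no t-cover exists) *)
Definition tau (n t : nat) (G : {set {set 'I_n}}) : nat :=
  \big[minn/n.+1]_(S : {set 'I_n} | is_tcover t G S) #|S|.

Definition Tcov (n t : nat) (G : {set {set 'I_n}}) : {set {set 'I_n}} :=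
  [set S | is_tcover t G S & #|S| == tau t G].

Definition Ucov (n t : nat) (F : {set {set 'I_n}}) : {set {set 'I_n}} :=
  Tcov t (Tcov t F).

Definition maximal_t_intersecting (n k t : nat) (F : {set {set 'I_n}}) : Prop :=
  [/\ k_uniform k F, t_intersecting t F &
      forall F' : {set {set 'I_n}}, k_uniform k F' -> t_intersecting t F' ->
        F \subset F' -> F' = F].

(* Main.v *)
Require Import Defs.
From mathcomp Require Import all_boot zify.
Set Implicit Arguments. Unset Strict Implicit. Unset Printing Implicit Defensive.


Section Graph.
Variable T : finType.
Variable C : {set T}.

Definition P2 := [set g : {set T} | (g \subset C) && (#|g| == 2)].

Lemma P2P g : g \in P2 -> g \subset C /\ #|g| = 2.
Proof. by rewrite inE => /andP[? /eqP]. Qed.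

Lemma two_eq (g : {set T}) u v : #|g| = 2 -> u \in g -> v \in g -> u != v ->
  g = [set u; v].
Proof.
move=> hg hu hv huv; apply/esym/eqP; rewrite eqEcard cards2 huv hg leqnn andbT.
by apply/subsetP=> w; rewrite !inE => /orP[]/eqP->.
Qed.

Lemma two_other (g : {set T}) x : g \in P2 -> x \in g ->
  exists y, [/\ y \in C, y != x & g = [set x; y]].
Proof.
move=> /P2P[sgC hg] xg.
have : #|g :\ x| == 1 by move: hg; rewrite (cardsD1 x g) xg add1n => -[->].
case/cards1P=> y hy.
have yg : y \in g :\ x by rewrite hy set11.
move: yg; rewrite !inE => /andP[yx yg].
exists y; split => //; first exact: (subsetP sgC).
by apply: two_eq => //; rewrite eq_sym.
Qed.

Lemma star_gen (X : {set {set T}}) x (D : {set T}) :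
  (forall g, g \in X -> exists2 w, w \in D & g = [set x; w]) -> #|X| <= #|D|.
Proof.
move=> h; apply: (leq_trans _ (leq_imset_card (fun w => [set x; w]) D)).
apply: subset_leq_card; apply/subsetP=> g /h [w wD ->].
by apply/imsetP; exists w.
Qed.

Lemma star_card (X : {set {set T}}) x : x \in C -> X \subset P2 ->
  (forall g, g \in X -> x \in g) -> #|X| <= #|C| - 1.
Proof.
move=> xC sX hx.
have -> : #|C| - 1 = #|C :\ x| by rewrite (cardsD1 x C) xC; lia.
apply: star_gen => g gX.
have [y [yC yx ->]] := two_other (subsetP sX g gX) (hx g gX).
by exists y => //; rewrite !inE yx.
Qed.

Definition meet (g e : {set T}) := g :&: e != set0.

Lemma meetC (g e : {set T}) : meet g e = meet e g.
Proof. by rewrite /meet setIC. Qed.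

Lemma meetP (g e : {set T}) : reflect (exists2 w, w \in g & w \in e) (meet g e).
Proof.
apply: (iffP (set0Pn _)) => [[w]|[w ? ?]]; first by rewrite inE => /andP[]; exists w.
by exists w; rewrite inE; apply/andP.
Qed.

Lemma meet2 (g : {set T}) x y : meet g [set x; y] = (x \in g) || (y \in g).
Proof.
apply/meetP/orP => [[w wg]|[xg|yg]]; last by exists y => //; rewrite !inE eqxx orbT.
  by rewrite !inE => /orP[]/eqP<-; [left|right].
by exists x => //; rewrite !inE eqxx.
Qed.

Lemma F1 (X : {set {set T}}) e : e \in P2 -> X \subset P2 ->
  (forall g, g \in X -> meet g e) -> #|X| <= 2 * #|C| - 3.
Proof.
move=> eP sX hX.
have [sE hE] := P2P eP.
have : #|e| == 2 by rewrite hE.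
case/cards2P=> x [y [xy ee]].
have xC : x \in C by apply: (subsetP sE); rewrite ee !inE eqxx.
have yC : y \in C by apply: (subsetP sE); rewrite ee !inE eqxx orbT.
have -> : X = [set g in X | x \in g] :|: [set g in X | x \notin g].
  by apply/setP=> g; rewrite !inE; case: (x \in g); rewrite ?andbT ?andbF ?orbF.
apply: (leq_trans (leq_card_setU _ _)).
have h1 : #|[set g in X | x \in g]| <= #|C| - 1.
  apply: (@star_card _ x xC).
    by apply/subsetP=> g; rewrite inE => /andP[gX _]; exact: (subsetP sX).
  by move=> g; rewrite inE => /andP[_ ->].
have h2 : #|[set g in X | x \notin g]| <= #|C :\: [set x; y]|.
  apply: star_gen => g; rewrite inE => /andP[gX xg].
  have := hX g gX; rewrite ee meet2 (negbTE xg) /= => yg.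
  have [w [wC wy gE]] := two_other (subsetP sX g gX) yg.
  exists w; last exact: gE.
  rewrite !inE wC andbT negb_or wy andbT.
  by apply: contra xg => /eqP <-; rewrite gE !inE eqxx orbT.
have h3 : #|C :\: [set x; y]| = #|C| - 2.
  rewrite cardsDS ?cards2 ?xy //.
  by apply/subsetP=> w; rewrite !inE => /orP[]/eqP->.
have hC : 2 <= #|C|.
  by rewrite -hE; apply: subset_leq_card.
lia.
Qed.


Lemma card3le (p q r : {set T}) : #|[set p; q; r]| <= 3.
Proof.
apply: (leq_trans (leq_card_setU _ _)); rewrite cards1.
by apply: (leq_trans (leq_add (leq_card_setU _ _) (leqnn 1))); rewrite !cards1.
Qed.

Lemma le1 (Z : {set {set T}}) p q : Z \subset [set p; q] ->
  ~~ ((p \in Z) && (q \in Z)) -> #|Z| <= 1.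
Proof.
move=> sZ h.
case pZ: (p \in Z).
  have : Z \subset [set p].
    apply/subsetP=> g gZ; have := subsetP sZ g gZ; rewrite !inE => /orP[//|/eqP E].
    by move: h; rewrite pZ -E gZ.
  by move/subset_leq_card; rewrite cards1.
have : Z \subset [set q].
  apply/subsetP=> g gZ; have := subsetP sZ g gZ; rewrite !inE => /orP[/eqP E|//].
  by move: pZ; rewrite -E gZ.
by move/subset_leq_card; rewrite cards1.
Qed.

Lemma F2 (X : {set {set T}}) e f : e \in P2 -> f \in P2 -> e != f -> meet e f ->
  X \subset P2 -> (forall g, g \in X -> meet g e && meet g f) -> #|X| <= #|C|.
Proof.
move=> eP fP ef /meetP [x xe xf] sX hX.
have [y [yC yx eE]] := two_other eP xe.
have [z [zC zx fE]] := two_other fP xf.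
have yz : y != z by apply: contraNneq ef => yz; rewrite eE fE yz.
have xC : x \in C by have [sE _] := P2P eP; exact: (subsetP sE).
have -> : X = [set g in X | x \in g] :|: [set g in X | x \notin g].
  by apply/setP=> g; rewrite !inE; case: (x \in g); rewrite ?andbT ?andbF ?orbF.
apply: (leq_trans (leq_card_setU _ _)).
have h1 : #|[set g in X | x \in g]| <= #|C| - 1.
  apply: (@star_card _ x xC).
    by apply/subsetP=> g; rewrite inE => /andP[gX _]; exact: (subsetP sX).
  by move=> g; rewrite inE => /andP[_ ->].
have h2 : #|[set g in X | x \notin g]| <= 1.
  have : [set g in X | x \notin g] \subset [set [set y; z]].
    apply/subsetP=> g; rewrite inE => /andP[gX xg].
    have /andP[] := hX g gX; rewrite eE fE !meet2 (negbTE xg) /= => yg zg.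
    have [_ hg] := P2P (subsetP sX g gX).
    by rewrite (two_eq hg yg zg yz) inE.
  by move/subset_leq_card; rewrite cards1.
have : 0 < #|C| by apply/card_gt0P; exists x.
lia.
Qed.

Lemma F3a (X : {set {set T}}) e f : e \in P2 -> f \in P2 -> ~~ meet e f ->
  X \subset P2 -> (forall g, g \in X -> meet g e && meet g f) -> #|X| <= 4.
Proof.
move=> eP fP ef sX hX.
have [_ he] := P2P eP; have [_ hf] := P2P fP.
apply: (@leq_trans #|[set [set p.1; p.2] | p in setX e f]|); last first.
  by apply: (leq_trans (leq_imset_card _ _)); rewrite cardsX he hf.
apply: subset_leq_card; apply/subsetP=> g gX.
have /andP[/meetP[u ug ue] /meetP[v vg vf]] := hX g gX.
have uv : u != v by apply: contra ef => /eqP uv; apply/meetP; exists u => //; rewrite uv.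
have [_ hg] := P2P (subsetP sX g gX).
apply/imsetP; exists (u, v); first by rewrite inE ue vf.
exact: two_eq.
Qed.

Lemma F3b (X : {set {set T}}) e f : e \in P2 -> f \in P2 -> ~~ meet e f ->
  X \subset P2 -> (forall g, g \in X -> meet g e && meet g f) ->
  (forall g g', g \in X -> g' \in X -> meet g g') -> #|X| <= 2.
Proof.
move=> eP fP ef sX hX hI.
have [_ he] := P2P eP; have [_ hf] := P2P fP.
have : #|e| == 2 by rewrite he.
case/cards2P=> x [y [xy eE]].
have : #|f| == 2 by rewrite hf.
case/cards2P=> a [b [ab fE]].
have D : forall u v, u \in e -> v \in f -> u != v.
  by move=> u v ue vf; apply: contra ef => /eqP uv; apply/meetP; exists u => //; rewrite uv.
have xa : x != a by apply: D; rewrite ?eE ?fE !inE eqxx ?orbT.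
have xb : x != b by apply: D; rewrite ?eE ?fE !inE eqxx ?orbT.
have ya : y != a by apply: D; rewrite ?eE ?fE !inE eqxx ?orbT.
have yb : y != b by apply: D; rewrite ?eE ?fE !inE eqxx ?orbT.
pose Y1 := [set [set x; a]; [set y; b]].
pose Y2 := [set [set x; b]; [set y; a]].
have sXY : X \subset (X :&: Y1) :|: (X :&: Y2).
  apply/subsetP=> g gX.
  have /andP[/meetP[u ug ue] /meetP[v vg vf]] := hX g gX.
  have [_ hg] := P2P (subsetP sX g gX).
  rewrite !inE gX /= (two_eq hg ug vg (D u v ue vf)).
  move: ue vf; rewrite eE fE !inE => /orP[]/eqP-> /orP[]/eqP->;
  by rewrite !eqxx ?orbT.
have nm1 : ~~ meet [set x; a] [set y; b].
  rewrite meet2 !inE; apply/negP; (repeat case/orP) => /eqP E; subst;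
  by move: xy xa xb ya yb ab; rewrite ?eqxx.
have nm2 : ~~ meet [set x; b] [set y; a].
  rewrite meet2 !inE; apply/negP; (repeat case/orP) => /eqP E; subst;
  by move: xy xa xb ya yb ab; rewrite ?eqxx.
have h1 : #|X :&: Y1| <= 1.
  apply: (@le1 _ [set x; a] [set y; b]); first exact: subsetIr.
  rewrite !inE; apply/negP => /andP[/andP[g1 _] /andP[g2 _]].
  by move: nm1; rewrite hI.
have h2 : #|X :&: Y2| <= 1.
  apply: (@le1 _ [set x; b] [set y; a]); first exact: subsetIr.
  rewrite !inE; apply/negP => /andP[/andP[g1 _] /andP[g2 _]].
  by move: nm2; rewrite hI.
apply: (leq_trans (subset_leq_card sXY)); apply: (leq_trans (leq_card_setU _ _)).
exact: (leq_add h1 h2).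
Qed.


Lemma card2_ex (A : finType) (S : {set A}) : 1 < #|S| ->
  exists a b, [/\ a \in S, b \in S & b != a].
Proof.
move=> h.
have : 0 < #|S| by apply: ltnW.
case/card_gt0P=> a aS.
have : 0 < #|S :\ a| by move: h; rewrite (cardsD1 a S) aS.
case/card_gt0P=> b; rewrite !inE => /andP[ba bS].
by exists a, b.
Qed.

Lemma card3_ex (A : finType) (S : {set A}) : 2 < #|S| ->
  exists a b c, [/\ a \in S, b \in S, c \in S & [/\ b != a, c != a & c != b]].
Proof.
move=> h.
have : 0 < #|S| by apply: (leq_trans _ h).
case/card_gt0P=> a aS.
have h1 : 1 < #|S :\ a| by move: h; rewrite (cardsD1 a S) aS.
have [b [c [bS cS cb]]] := card2_ex h1.
move: bS cS; rewrite !inE => /andP[ba bS] /andP[ca cS].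
by exists a, b, c; split.
Qed.

Lemma F4 (X : {set {set T}}) : 4 <= #|C| -> X \subset P2 ->
  (forall g g', g \in X -> g' \in X -> meet g g') -> #|X| <= #|C| - 1.
Proof.
move=> hC sX hI.
case: (leqP #|X| 2) => [h2|h3].
  by apply: (leq_trans h2); move: hC; clear; lia.
have [e1 [e2 [e3 [e1X e2X e3X [e21 e31 e32]]]]] := card3_ex h3.
have P e : e \in X -> e \in P2 by exact: (subsetP sX).
have /meetP[u ue1 ue2] := hI e1 e2 e1X e2X.
have [y [yC yu E1]] := two_other (P e1 e1X) ue1.
have [z [zC zu E2]] := two_other (P e2 e2X) ue2.
have uC : u \in C by have [sE _] := P2P (P e1 e1X); exact: (subsetP sE).
have yz : y != z by apply: contraNneq e21 => yz; rewrite E1 E2 yz.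
case ue3: (u \in e3).
  have [w [wC wu E3]] := two_other (P e3 e3X) ue3.
  have wy : w != y by apply: contraNneq e31 => wy; rewrite E3 E1 wy.
  have wz : w != z by apply: contraNneq e32 => wz; rewrite E3 E2 wz.
  apply: (@star_card _ u uC sX) => g gX; apply/negPn/negP => ug.
  have := hI g e1 gX e1X; rewrite E1 meet2 (negbTE ug) /= => yg.
  have := hI g e2 gX e2X; rewrite E2 meet2 (negbTE ug) /= => zg.
  have := hI g e3 gX e3X; rewrite E3 meet2 (negbTE ug) /= => wg.
  have [_ hg] := P2P (P g gX).
  move: wg; rewrite (two_eq hg yg zg yz) !inE => /orP[]/eqP E.
    by rewrite E eqxx in wy.
  by rewrite E eqxx in wz.
have := hI e3 e1 e3X e1X; rewrite E1 meet2 ue3 /= => ye3.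
have := hI e3 e2 e3X e2X; rewrite E2 meet2 ue3 /= => ze3.
have uy : u != y by rewrite eq_sym.
have uz : u != z by rewrite eq_sym.
have E3 : e3 = [set y; z] by have [_ h] := P2P (P e3 e3X); exact: two_eq.
apply: (@leq_trans 3); last by move: hC; clear; lia.
apply: (leq_trans _ (card3le [set u; y] [set u; z] [set y; z])).
apply: subset_leq_card; apply/subsetP => g gX.
have [_ hg] := P2P (P g gX).
case ug: (u \in g).
  have := hI g e3 gX e3X; rewrite E3 meet2 => /orP[yg|zg].
    by rewrite (two_eq hg ug yg uy) !inE eqxx.
  by rewrite (two_eq hg ug zg uz) !inE eqxx ?orbT.
have := hI g e1 gX e1X; rewrite E1 meet2 ug /= => yg.
have := hI g e2 gX e2X; rewrite E2 meet2 ug /= => zg.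
by rewrite (two_eq hg yg zg yz) !inE eqxx ?orbT.
Qed.

Lemma L1 (E E' : {set {set T}}) e1 e2 : 5 <= #|C| -> E \subset P2 -> E' \subset P2 ->
  (forall g f, g \in E -> f \in E' -> meet g f) -> E' != set0 ->
  e1 \in E -> e2 \in E -> ~~ meet e1 e2 -> #|E| + #|E'| <= 2 * #|C| - 2.
Proof.
move=> hC sE sE' hX nE' e1E e2E n12.
have hE' : #|E'| <= 4.
  apply: (F3a (subsetP sE e1 e1E) (subsetP sE e2 e2E) n12 sE') => f fE.
  by rewrite meetC hX // meetC hX.
case: (boolP [exists f1 in E', exists f2 in E', ~~ meet f1 f2]).
  case/exists_inP => f1 f1E /exists_inP [f2 f2E nm].
  have hE : #|E| <= 4.
    apply: (F3a (subsetP sE' f1 f1E) (subsetP sE' f2 f2E) nm sE) => g gE.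
    by rewrite !hX.
  move: hC hE hE'; clear; lia.
move=> nd.
have hI : forall f f', f \in E' -> f' \in E' -> meet f f'.
  move=> f f' fE f'E; case: (boolP (meet _ _)) => // h; move/negP: nd; case.
  by apply/exists_inP; exists f => //; apply/exists_inP; exists f'.
have h2 : #|E'| <= 2.
  apply: (F3b (subsetP sE e1 e1E) (subsetP sE e2 e2E) n12 sE' _ hI) => f fE.
  by rewrite meetC hX // meetC hX.
case: (leqP #|E'| 1) => h1.
  case/set0Pn: nE' => f fE.
  have hE : #|E| <= 2 * #|C| - 3.
    by apply: (F1 (subsetP sE' f fE) sE) => g gE; apply: hX.
  move: hC hE h1; clear; lia.
have [f1 [f2 [f1E f2E f21]]] := card2_ex h1.
have hE : #|E| <= #|C|.
  apply: (F2 (subsetP sE' f1 f1E) (subsetP sE' f2 f2E) _ (hI _ _ f1E f2E) sE).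
    by rewrite eq_sym.
  by move=> g gE; rewrite !hX.
move: hC hE h2; clear; lia.
Qed.

Lemma L (E E' : {set {set T}}) : 5 <= #|C| -> E \subset P2 -> E' \subset P2 ->
  (forall g f, g \in E -> f \in E' -> meet g f) -> E != set0 -> E' != set0 ->
  #|E| + #|E'| <= 2 * #|C| - 2.
Proof.
move=> hC sE sE' hX nE nE'.
case: (boolP [exists e1 in E, exists e2 in E, ~~ meet e1 e2]).
  case/exists_inP => e1 e1E /exists_inP [e2 e2E nm].
  exact: (L1 hC sE sE' hX nE' e1E e2E nm).
move=> ndE.
case: (boolP [exists e1 in E', exists e2 in E', ~~ meet e1 e2]).
  case/exists_inP => e1 e1E /exists_inP [e2 e2E nm].
  rewrite addnC; apply: (L1 hC sE' sE _ nE e1E e2E nm).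
  by move=> g f gE fE; rewrite meetC hX.
move=> ndE'.
have hI : forall g g', g \in E :|: E' -> g' \in E :|: E' -> meet g g'.
  move=> g g'; rewrite !inE => /orP[gE|gE] /orP[g'E|g'E].
  - case: (boolP (meet _ _)) => // h; move/negP: ndE; case.
    by apply/exists_inP; exists g => //; apply/exists_inP; exists g'.
  - exact: hX.
  - by rewrite meetC hX.
  - case: (boolP (meet _ _)) => // h; move/negP: ndE'; case.
    by apply/exists_inP; exists g => //; apply/exists_inP; exists g'.
have sU : E :|: E' \subset P2 by rewrite subUset sE sE'.
have hU := F4 (leq_trans (leqnSn 4) hC) sU hI.
have h1 := subset_leq_card (subsetUl E E').
have h2 := subset_leq_card (subsetUr E E').
move: hU h1 h2 hC; clear; lia.
Qed.

End Graph.


Lemma bigmin_le (I : eqType) (r : seq I) (P : pred I) (F : I -> nat) x i :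
  i \in r -> P i -> \big[minn/x]_(j <- r | P j) F j <= F i.
Proof.
elim: r => [//|a r IH]; rewrite inE big_cons => /orP[/eqP<- Pi|ir Pi].
  by rewrite Pi geq_minl.
case: (P a); last exact: IH.
by rewrite geq_min IH ?orbT.
Qed.
Lemma tau_le n t (G : {set {set 'I_n}}) S : is_tcover t G S -> tau t G <= #|S|.
Proof. by move=> h; rewrite /tau; apply: bigmin_le; rewrite ?mem_index_enum. Qed.

Lemma TcovP n t (G : {set {set 'I_n}}) T :
  T \in Tcov t G -> is_tcover t G T /\ #|T| = tau t G.
Proof. by rewrite inE => /andP[? /eqP]. Qed.

Lemma tcoverP n t (G : {set {set 'I_n}}) S :
  is_tcover t G S -> forall G0, G0 \in G -> t <= #|S :&: G0|.
Proof. by move/forall_inP. Qed.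

Lemma sub_card (T : finType) (S : {set T}) j : j <= #|S| ->
  exists2 R : {set T}, R \subset S & #|R| = j.
Proof.
elim: j => [|j IH] h; first by exists (set0 : {set T}); rewrite ?sub0set ?cards0.
have [R RS hR] := IH (ltnW h).
have : 0 < #|S :\: R| by rewrite cardsDS // hR; lia.
case/card_gt0P=> x; rewrite inE => /andP[xR xS].
exists (x |: R); first by rewrite subUset sub1set xS RS.
by rewrite cardsU1 xR hR.
Qed.

Lemma extend n (T X : {set 'I_n}) k : #|T| <= k -> #|T :|: X| + (k - #|T|) <= n ->
  exists H : {set 'I_n}, [/\ T \subset H, #|H| = k & H :&: X \subset T].
Proof.
move=> hT hn.
have hc : k - #|T| <= #|~: (T :|: X)|.
  have := cardsC (T :|: X); rewrite card_ord; lia.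
have [R RS hR] := sub_card hc.
exists (T :|: R); split; first exact: subsetUl.
  rewrite cardsU hR.
  have -> : T :&: R = set0.
    apply/setP=> x; rewrite !inE; apply/negP=> /andP[xT xR].
    by move: (subsetP RS x xR); rewrite !inE xT.
  rewrite cards0; lia.
apply/subsetP=> x; rewrite !inE => /andP[/orP[//|xR] xX].
by move: (subsetP RS x xR); rewrite !inE xX orbT.
Qed.

Lemma super_in n k t (F : {set {set 'I_n}}) (T H : {set 'I_n}) :
  maximal_t_intersecting k t F -> t <= k -> is_tcover t F T ->
  T \subset H -> #|H| = k -> H \in F.
Proof.
case=> kU tI mx tk cT TH hH.
have E := mx (H |: F).
have : H |: F = F.
  apply: E; last exact: subsetUr.
    apply/forall_inP=> A; rewrite !inE => /orP[/eqP->|AF]; first by rewrite hH.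
    by move/forall_inP: kU; apply.
  apply/forall_inP=> A AF; apply/forall_inP=> B BF.
  have cov : forall G, G \in F -> t <= #|H :&: G|.
    move=> G GF; apply: (leq_trans (tcoverP cT GF)).
    by apply: subset_leq_card; apply: setSI.
  move: AF BF; rewrite !inE => /orP[/eqP->|AF] /orP[/eqP->|BF].
  - by rewrite setIid hH.
  - exact: cov.
  - by rewrite setIC; apply: cov.
  - by move/forall_inP: tI => /(_ A AF) /forall_inP; apply.
by move=> <-; rewrite !inE eqxx.
Qed.

Lemma pair_int n k t (F : {set {set 'I_n}}) (T1 T2 : {set 'I_n}) :
  2 * k < n -> maximal_t_intersecting k t F -> t <= k ->
  is_tcover t F T1 -> is_tcover t F T2 -> #|T1| <= k -> #|T2| <= k ->
  #|T1| + #|T2| + (k - #|T1|) + (k - #|T2|) <= n ->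
  t <= #|T1 :&: T2|.
Proof.
move=> hn mF tk c1 c2 h1 h2 hs.
have [H1 [s1 e1 i1]] : exists H : {set 'I_n}, [/\ T1 \subset H, #|H| = k & H :&: T2 \subset T1].
  apply: extend => //; apply: (leq_trans _ hs).
  apply: (leq_trans _ (leq_addr (k - #|T2|) _)); rewrite leq_add2r.
  exact: leq_card_setU.
have [H2 [s2 e2 i2]] : exists H : {set 'I_n}, [/\ T2 \subset H, #|H| = k & H :&: H1 \subset T2].
  apply: extend => //; apply: (leq_trans _ (ltnW hn)).
  apply: (leq_trans (leq_add (leq_card_setU T2 H1) (leqnn _))).
  rewrite e1; move: h2; clear; lia.
have H1F := super_in mF tk c1 s1 e1.
have H2F := super_in mF tk c2 s2 e2.
case: mF => _ tI _.
have : t <= #|H1 :&: H2|.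
  by move/forall_inP: tI => /(_ H1 H1F) /forall_inP; apply.
move/leq_trans; apply; apply: subset_leq_card; apply/subsetP=> x.
rewrite !inE => /andP[x1 x2].
have xT2 : x \in T2 by apply: (subsetP i2); rewrite !inE x1 x2.
have xT1 : x \in T1 by apply: (subsetP i1); rewrite !inE x1 xT2.
by rewrite xT1 xT2.
Qed.


Ltac bf := repeat match goal with |- context[?a \in ?S] => case: (a \in S) end.

Lemma cardU_disj (V : finType) (X Y : {set V}) : X :&: Y = set0 -> #|X :|: Y| = #|X| + #|Y|.
Proof. by move=> h; rewrite cardsU h cards0 subn0. Qed.

Lemma structT n t (T U F0 : {set 'I_n}) :
  2 <= t -> #|T| = t + 2 -> t <= #|T :&: F0| -> t <= #|U :&: T| -> #|U :&: F0| <= t - 2 ->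
  [/\ #|U :&: F0| = t - 2, U :&: F0 \subset T, #|T :&: (U :\: F0)| = 2,
      #|T :&: (F0 :\: U)| = 2 &
      T = (U :&: F0) :|: (T :&: (U :\: F0)) :|: (T :&: (F0 :\: U))].
Proof.
move=> ht hT c1 c2 hA.
have d1 : #|T :&: F0| <= #|T :&: (U :&: F0)| + #|T :&: (F0 :\: U)|.
  apply: leq_trans (leq_card_setU _ _); apply: subset_leq_card.
  by apply/subsetP=> x; rewrite !inE; bf.
have d2 : #|U :&: T| <= #|T :&: (U :&: F0)| + #|T :&: (U :\: F0)|.
  apply: leq_trans (leq_card_setU _ _); apply: subset_leq_card.
  by apply/subsetP=> x; rewrite !inE; bf.
have d3 : #|(T :&: (U :&: F0)) :|: (T :&: (U :\: F0)) :|: (T :&: (F0 :\: U))| =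
   #|T :&: (U :&: F0)| + #|T :&: (U :\: F0)| + #|T :&: (F0 :\: U)|.
  rewrite !cardU_disj //; by apply/setP=> x; rewrite !inE; bf.
have d4 : #|T :&: (U :&: F0)| + #|T :&: (U :\: F0)| + #|T :&: (F0 :\: U)| <= #|T|.
  by rewrite -d3; apply: subset_leq_card; apply/subsetP=> x; rewrite !inE; bf.
have d5 : #|T :&: (U :&: F0)| <= #|U :&: F0| by apply: subset_leq_card; apply: subsetIr.
have [eA eB eC eU] : [/\ #|T :&: (U :&: F0)| = t - 2, #|T :&: (U :\: F0)| = 2,
    #|T :&: (F0 :\: U)| = 2 & #|U :&: F0| = t - 2].
  move: d1 d2 d4 d5 c1 c2 hA hT ht.
  move: #|T :&: (U :&: F0)| #|T :&: (U :\: F0)| #|T :&: (F0 :\: U)| #|T :&: F0| #|U :&: T| #|U :&: F0|.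
  move: #|T|.
  clear => a b c d e f g *; split; lia.
have eqA : T :&: (U :&: F0) = U :&: F0.
  by apply/eqP; rewrite eqEcard subsetIr eA eU leqnn.
split => //; first by rewrite -eqA subsetIl.
rewrite -{1}eqA; apply/eqP; rewrite eq_sym eqEcard d3 eA eB eC hT.
apply/andP; split; last by move: ht; clear; lia.
by apply/subsetP=> x; rewrite !inE; bf.
Qed.

Lemma card3 (V : finType) (a b c : V) : b != a -> c != a -> c != b -> #|[set a; b; c]| = 3.
Proof.
move=> ba ca cb; rewrite setUC cardsU1 cards2 !inE negb_or ca cb eq_sym ba.
by [].
Qed.


Ltac bf2 := repeat match goal with
  | |- context[?a \in ?S] => case: (a \in S)
  | |- context[?a == ?b] => case: (a == b) end.

Theorem lemma2p6 (n k t : nat) (F : {set {set 'I_n}}) :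
  2 * k < n -> t + 3 <= k -> 2 <= t ->
  maximal_t_intersecting k t F ->
  tau t F = t + 2 ->
  tau t (Tcov t F) = t + 1 ->
  (exists U, exists2 A, U \in Ucov t F & A \in F /\ #|U :&: A| <= t - 2) ->
  #|Tcov t F| < (t + 2) * (k - t) + 1.
Proof.
move=> hn htk ht2 mF tauF tauT [U [F0 UU [F0F hUF0]]].
have mF' := mF; case: mF' => kU tI _.
have hT : forall T, T \in Tcov t F -> is_tcover t F T /\ #|T| = t + 2.
  by move=> T /TcovP [c e]; rewrite -tauF.
have [cU hU] := TcovP UU; rewrite tauT in hU.
have hF0 : #|F0| = k by move/forall_inP: kU => /(_ F0 F0F) /eqP.
case: (boolP (Tcov t F == set0)) => [/eqP->|]; first by rewrite cards0 addn1.
case/set0Pn => T0 T0T.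
have st : forall T, T \in Tcov t F ->
    [/\ #|U :&: F0| = t - 2, U :&: F0 \subset T, #|T :&: (U :\: F0)| = 2,
      #|T :&: (F0 :\: U)| = 2 &
      T = (U :&: F0) :|: (T :&: (U :\: F0)) :|: (T :&: (F0 :\: U))].
  move=> T TT; have [cT hTc] := hT T TT.
  apply: structT => //; first by move/forall_inP: cT; apply.
  by move/forall_inP: cU; apply.
have [hA _ _ _ _] := st T0 T0T.
have hB : #|U :\: F0| = 3.
  have := cardsID F0 U; rewrite hU hA; move: ht2; clear; lia.
have hC : #|F0 :\: U| = k - t + 2.
  have := cardsID U F0; rewrite setIC hF0 hA; move: ht2 htk; clear; lia.
pose cl b := [set T in Tcov t F | b \notin T].
pose E b := [set T :&: (F0 :\: U) | T in cl b].
have clP : forall b T, T \in cl b -> T \in Tcov t F /\ b \notin T.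
  by move=> b T; rewrite /cl inE => /andP[].
have clB : forall b T, b \in U :\: F0 -> T \in cl b -> T :&: (U :\: F0) = (U :\: F0) :\ b.
  move=> b T bB /clP [TT bT].
  have [_ _ e2 _ _] := st T TT.
  apply/eqP; rewrite eqEcard; apply/andP; split.
    apply/subsetP=> x; rewrite !inE => /andP[xT ->]; rewrite andbT.
    by apply/eqP => xb; move: bT; rewrite -xb xT.
  move: hB; rewrite e2 (cardsD1 b (U :\: F0)) bB; clear; lia.
have clE : forall b T, b \in U :\: F0 -> T \in cl b ->
    T = (U :&: F0) :|: ((U :\: F0) :\ b) :|: (T :&: (F0 :\: U)).
  move=> b T bB Tc; have [TT _] := clP _ _ Tc.
  have [_ _ _ _ eT] := st T TT; by rewrite {1}eT (clB b T).
have cardE : forall b, b \in U :\: F0 -> #|cl b| = #|E b|.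
  move=> b bB; rewrite card_in_imset // => T T' Tc T'c e.
  by rewrite (clE b T) // (clE b T') // e.
have EP2 : forall b, E b \subset P2 (F0 :\: U).
  move=> b; apply/subsetP => g /imsetP [T Tc ->]; have [TT _] := clP _ _ Tc.
  have [_ _ _ e3 _] := st T TT; by rewrite inE subsetIr e3.
have tk : t <= k by move: htk; clear; lia.
have cross : forall b b' g f, b \in U :\: F0 -> b' \in U :\: F0 -> b != b' ->
    g \in E b -> f \in E b' -> meet g f.
  move=> b b' g f bB b'B bb' /imsetP[T Tc ->] /imsetP[T' T'c ->].
  have [TT bT] := clP _ _ Tc; have [T'T b'T] := clP _ _ T'c.
  have [cT sT] := hT T TT; have [cT' sT'] := hT T' T'T.
  have hI : t <= #|T :&: T'|.
    apply: (pair_int hn mF) => //; rewrite ?sT ?sT'; move: htk hn; clear; lia.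
  have sub : T :&: T' \subset (U :&: F0) :|: ((U :\: F0) :\ b :\ b') :|:
      ((T :&: (F0 :\: U)) :&: (T' :&: (F0 :\: U))).
    apply/subsetP => x; rewrite inE => /andP[].
    by rewrite {1}(clE b T) // {1}(clE b' T') // !inE; bf2.
  have c1 : #|(U :\: F0) :\ b :\ b'| = 1.
    have b'B' : b' \in (U :\: F0) :\ b by rewrite in_setD1 eq_sym bb' b'B.
    move: hB; rewrite (cardsD1 b (U :\: F0)) bB (cardsD1 b' ((U :\: F0) :\ b)).
    rewrite b'B'; clear; lia.
  have := subset_leq_card sub.
  move/leq_trans => /(_ _ (leq_card_setU _ _)).
  move/leq_trans => /(_ _ (leq_add (leq_card_setU _ _) (leqnn _))).
  rewrite hA c1 /meet -card_gt0 => h; move: h hI ht2; clear; lia.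
have one : forall b, b \in U :\: F0 -> (forall T, T \in Tcov t F -> T \in cl b) -> False.
  move=> b bB hb.
  have Ssub : forall T, T \in Tcov t F -> (U :&: F0) :|: ((U :\: F0) :\ b) \subset T.
    by move=> T TT; rewrite (clE b T) ?hb //; apply/subsetP => x; rewrite !inE; bf2.
  have hS : #|(U :&: F0) :|: ((U :\: F0) :\ b)| = t.
    rewrite cardU_disj; last by apply/setP=> x; rewrite !inE; bf2.
    move: hB; rewrite hA (cardsD1 b (U :\: F0)) bB; move: ht2; clear; lia.
  have cS : is_tcover t (Tcov t F) ((U :&: F0) :|: ((U :\: F0) :\ b)).
    by apply/forall_inP => T TT; rewrite (setIidPl (Ssub T TT)) hS.
  have := tau_le cS; rewrite tauT hS; clear; lia.
have [b1 [b2 [b3 [b1B b2B b3B [e21 e31 e32]]]]] :=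
  card3_ex (ltac:(by rewrite hB) : 2 < #|U :\: F0|).
have cov : forall T, T \in Tcov t F -> [|| T \in cl b1, T \in cl b2 | T \in cl b3].
  move=> T TT.
  have memcl : forall b, (T \in cl b) = (b \notin T).
    by move=> b; apply/idP/idP => [/setIdP[]//|h]; apply/setIdP.
  rewrite !memcl.
  have [_ _ e2 _ _] := st T TT.
  case b1T: (b1 \in T); case b2T: (b2 \in T); case b3T: (b3 \in T) => //=.
  have sub : [set b1; b2; b3] \subset T :&: (U :\: F0).
    by apply/subsetP=> x; rewrite !inE => /orP[/orP[]|]/eqP->; rewrite ?b1T ?b2T ?b3T /=;
      move: b1B b2B b3B; rewrite !inE.
  by have := subset_leq_card sub; rewrite e2 card3.
have hTT : #|Tcov t F| <= #|E b1| + #|E b2| + #|E b3|.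
  rewrite -!cardE //.
  have sc : Tcov t F \subset cl b1 :|: cl b2 :|: cl b3.
    by apply/subsetP => T TT; rewrite !in_setU -orbA; apply: cov.
  apply: (leq_trans (subset_leq_card sc)).
  apply: (leq_trans (leq_card_setU _ _)).
  exact: (leq_add (leq_card_setU _ _) (leqnn _)).
have hm : 5 <= #|F0 :\: U| by rewrite hC; move: htk; clear; lia.
have Lp : forall b b', b \in U :\: F0 -> b' \in U :\: F0 -> b != b' ->
    0 < #|E b| -> 0 < #|E b'| -> #|E b| + #|E b'| <= 2 * (k - t + 2) - 2.
  move=> b b' bB b'B bb' p1 p2; rewrite -hC.
  apply: L => //; try by rewrite -card_gt0.
  by move=> g f gE fE; apply: (cross b b').
have emp : forall b, b \in U :\: F0 -> #|E b| = 0 -> forall T, T \in cl b -> False.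
  move=> b bB h T Tc; move: h; rewrite -cardE // => /cards0_eq h.
  by move: Tc; rewrite h inE.
have only : forall b b' b'', b \in U :\: F0 -> b' \in U :\: F0 -> b'' \in U :\: F0 ->
    #|E b'| = 0 -> #|E b''| = 0 ->
    (forall T, T \in Tcov t F -> [|| T \in cl b, T \in cl b' | T \in cl b'']) -> False.
  move=> b b' b'' bB b'B b''B h' h'' hc; apply: (one b bB) => T TT.
  have := hc T TT; case/or3P => // Tc; [exfalso; exact: (emp b' b'B h' T Tc)|].
  by exfalso; exact: (emp b'' b''B h'' T Tc).
have h4 : 4 * (k - t) <= (t + 2) * (k - t) by apply: leq_mul => //; rewrite addnC ltnS.
move: h4; move: ((t + 2) * (k - t)) => P h4.
have e12 : b1 != b2 by rewrite eq_sym.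
have e13 : b1 != b3 by rewrite eq_sym.
have e23 : b2 != b3 by rewrite eq_sym.
have L12 := Lp b1 b2 b1B b2B e12.
have L13 := Lp b1 b3 b1B b3B e13.
have L23 := Lp b2 b3 b2B b3B e23.
case: (posnP #|E b1|) => h1; case: (posnP #|E b2|) => h2; case: (posnP #|E b3|) => h3.
- move: hTT; rewrite h1 h2 h3; clear; lia.
- exfalso; apply: (only b3 b1 b2) => //; move=> T TT; have := cov T TT.
  by case/or3P => ->; rewrite ?orbT.
- exfalso; apply: (only b2 b1 b3) => //; move=> T TT; have := cov T TT.
  by case/or3P => ->; rewrite ?orbT.
- have := L23 h2 h3; move: hTT h4 htk; rewrite h1; clear; lia.
- exfalso; apply: (only b1 b2 b3) => //.
- have := L13 h1 h3; move: hTT h4 htk; rewrite h2; clear; lia.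
- have := L12 h1 h2; move: hTT h4 htk; rewrite h3; clear; lia.
- have := L12 h1 h2; have := L13 h1 h3; have := L23 h2 h3.
  move: hTT h4 htk; clear; lia.
Qed.
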